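(* Let $A\subseteq 2^\omega$ be $\mu$-measurable. If $\Phi(A)\neq\emptyset$ and $\Phi(A)$ has empty interior, then $\Phi(A)$ is a complete $\boldsymbol{\Pi}^0_3$ set.
   Context: $2^\omega$ is the Cantor space with the product topology; $N_s=\{x\in 2^\omega: s\subset x\}$ for finite binary $s$. $\mu$ is the coin-tossing measure on $2^\omega$ with $\mu(N_s)=2^{-\mathrm{lh}(s)}$. For measurable $A$, $\Phi(A)=\{x: \lim_{n}\mu(A\cap N_{x\restriction n})/\mu(N_{x\restriction n})=1\}$. $\boldsymbol{\Pi}^0_3$ is the class of $F_{\sigma\delta}$ sets; $X\subseteq 2^\omega$ is complete $\boldsymbol{\Pi}^0_3$ if $X\in\boldsymbol{\Pi}^0_3$ and every $\boldsymbol{\Pi}^0_3$ subset of $2^\omega$ is a continuous preimage $f^{-1}(X)$ with $f:2^\omega\to 2^\omega$ continuous (equivalently $X$ is $F_{\sigma\delta}$ but not $G_{\delta\sigma}$). *)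

(* Defs.v *)
From Stdlib Require Import Reals List Arith.
Open Scope R_scope.

Definition Cantor := nat -> bool.
Definition CSet := Cantor -> Prop.

Definition restr (x : Cantor) (n : nat) : list bool := map x (seq 0 n).

Definition cyl (s : list bool) : CSet :=
  fun x => forall i, (i < length s)%nat -> nth i s false = x i.

Definition cyl_weight (s : list bool) : R := (/ 2) ^ (length s).

Definition covers (c : nat -> list bool) (A : CSet) : Prop :=
  forall x, A x -> exists i, cyl (c i) x.

(* mu_outer A = r : r is the infimum, over countable covers of A by basic
   clopen sets, of the total weight sum_i 2^{-lh(c i)} (a supremum of partial sums). *)
Definition outer_measure_is (A : CSet) (r : R) : Prop :=
  (forall c v, covers c A ->
     (forall n, sum_f_R0 (fun i => cyl_weight (c i)) n <= v) -> r <= v) /\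
  (forall eps, 0 < eps -> exists c, covers c A /\
     forall n, sum_f_R0 (fun i => cyl_weight (c i)) n <= r + eps).

Definition inter (A B : CSet) : CSet := fun x => A x /\ B x.
Definition diff (A B : CSet) : CSet := fun x => A x /\ ~ B x.

(* mu-measurable = Caratheodory measurable for the outer measure
   (i.e. in the completion of mu). *)
Definition measurable (A : CSet) : Prop :=
  forall E a b c, outer_measure_is E a -> outer_measure_is (inter E A) b ->
    outer_measure_is (diff E A) c -> a = b + c.

Definition Phi (A : CSet) : CSet := fun x =>
  exists d : nat -> R,
    (forall n, outer_measure_is (inter A (cyl (restr x n))) (d n)) /\
    Un_cv (fun n => d n / cyl_weight (restr x n)) 1.

Definition agree (n : nat) (x y : Cantor) : Prop := forall i, (i < n)%nat -> x i = y i.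
Definition is_open (U : CSet) : Prop :=
  forall x, U x -> exists n, forall y, agree n x y -> U y.
Definition is_closed (C : CSet) : Prop := is_open (fun x => ~ C x).
Definition continuous (f : Cantor -> Cantor) : Prop :=
  forall x n, exists m, forall y, agree m x y -> agree n (f x) (f y).

Definition empty_interior (X : CSet) : Prop :=
  forall U, is_open U -> (forall x, U x -> X x) -> forall x, ~ U x.

Definition Sigma02 (X : CSet) : Prop :=
  exists F : nat -> CSet, (forall k, is_closed (F k)) /\
    forall x, X x <-> exists k, F k x.
Definition Pi03 (X : CSet) : Prop :=
  exists G : nat -> CSet, (forall k, Sigma02 (G k)) /\
    forall x, X x <-> forall k, G k x.

Definition complete_Pi03 (X : CSet) : Prop :=
  Pi03 X /\ forall Y, Pi03 Y ->
    exists f, continuous f /\ forall x, Y x <-> X (f x).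

(* Main.v *)
Require Import Defs.
From Stdlib Require Import Reals List Arith.
From Stdlib Require Import Lia Lra Psatz Classical ClassicalEpsilon ClassicalDescription FinFun PArith.
Require Stdlib.Arith.Cantor.
Import ListNotations.
Open Scope R_scope.

Definition pfx (s t : list bool) : Prop := exists r, t = s ++ r.

Lemma length_restr x n : length (restr x n) = n.
Proof. unfold restr. rewrite length_map, length_seq. reflexivity. Qed.

Lemma nth_restr x n i : (i < n)%nat -> nth i (restr x n) false = x i.
Proof.
  intro H. unfold restr.
  rewrite nth_indep with (d' := x 0%nat) by (rewrite length_map, length_seq; lia).
  rewrite map_nth, seq_nth by lia. reflexivity.
Qed.

Lemma restr_add x n k : restr x (n + k) = restr x n ++ map x (seq n k).
Proof. unfold restr. rewrite seq_app, map_app. reflexivity. Qed.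

Lemma restr_S x n : restr x (S n) = restr x n ++ [x n].
Proof. replace (S n) with (n + 1)%nat by lia. rewrite restr_add. reflexivity. Qed.

Lemma cyl_restr s x : cyl s x <-> restr x (length s) = s.
Proof.
  split.
  - intro H. apply nth_ext with false false.
    + apply length_restr.
    + intros i Hi. rewrite length_restr in Hi. rewrite nth_restr by lia.
      symmetry. apply H. exact Hi.
  - intros H i Hi. rewrite <- H. rewrite nth_restr; [reflexivity|].
    rewrite <- H in Hi. rewrite length_restr in Hi. exact Hi.
Qed.

Lemma restr_cyl x n : cyl (restr x n) x.
Proof. apply cyl_restr. rewrite length_restr. reflexivity. Qed.

Lemma restr_pre x n m : (n <= m)%nat -> pfx (restr x n) (restr x m).
Proof.
  intro H. exists (map x (seq n (m - n))). rewrite <- restr_add. f_equal. lia.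
Qed.

Lemma agree_restr n x y : agree n x y -> restr x n = restr y n.
Proof.
  intro H. unfold restr. apply map_ext_in. intros a Ha. apply in_seq in Ha. apply H. lia.
Qed.

Lemma restr_agree n x y : restr x n = restr y n -> agree n x y.
Proof.
  intros H i Hi. rewrite <- (nth_restr x n i Hi), <- (nth_restr y n i Hi), H. reflexivity.
Qed.

Lemma agree_le n m x y : (m <= n)%nat -> agree n x y -> agree m x y.
Proof. intros H1 H2 i Hi. apply H2. lia. Qed.

Lemma cyl_app s r x : cyl (s ++ r) x -> cyl s x.
Proof.
  intros H i Hi. rewrite <- H by (rewrite length_app; lia). rewrite app_nth1 by lia. reflexivity.
Qed.

Lemma cyl_pre s t x : pfx s t -> cyl t x -> cyl s x.
Proof. intros [r ->]. apply cyl_app. Qed.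

Lemma cyl_agree s x y : cyl s x -> agree (length s) x y -> cyl s y.
Proof. intros H1 H2 i Hi. rewrite H1 by exact Hi. apply H2, Hi. Qed.

Lemma cyl_extend s x : cyl s x -> cyl (s ++ [x (length s)]) x.
Proof.
  intro H. apply cyl_restr in H. apply cyl_restr. rewrite length_app. simpl.
  replace (length s + 1)%nat with (S (length s)) by lia. rewrite restr_S, H. reflexivity.
Qed.

Definition ext0 (s : list bool) : Cantor := fun i => nth i s false.
Lemma cyl_ext0 s : cyl s (ext0 s).
Proof. intros i Hi. reflexivity. Qed.

Lemma cyl_two s t x : cyl s x -> cyl t x -> (length s <= length t)%nat -> pfx s t.
Proof.
  intros Hs Ht Hl. apply cyl_restr in Hs. apply cyl_restr in Ht.
  rewrite <- Hs, <- Ht. apply restr_pre. exact Hl.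
Qed.

Notation w := cyl_weight.
Lemma w_pos s : 0 < w s.
Proof. unfold cyl_weight. apply pow_lt. lra. Qed.
Lemma w_app s r : w (s ++ r) = w s * w r.
Proof. unfold cyl_weight. rewrite length_app. apply pow_add. Qed.
Lemma w_nil : w [] = 1.
Proof. reflexivity. Qed.
Lemma w_one b : w [b] = / 2.
Proof. unfold cyl_weight. simpl. lra. Qed.
Lemma w_le_1 s : w s <= 1.
Proof. unfold cyl_weight. induction (length s); simpl; [lra|]. assert (0 <= (/2)^n) by (apply pow_le; lra). nra. Qed.
Lemma w_app_le s r : w (s ++ r) <= w s.
Proof. rewrite w_app. pose proof (w_pos s). pose proof (w_le_1 r). pose proof (w_pos r). nra. Qed.
Lemma w_pre_le s t : pfx s t -> w t <= w s.
Proof. intros [r ->]. apply w_app_le. Qed.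
Lemma w_snoc s b : w (s ++ [b]) = w s / 2.
Proof. rewrite w_app, w_one. lra. Qed.

Definition lsum {X : Type} (g : X -> R) (l : list X) : R := fold_right (fun a s => g a + s) 0 l.

Lemma lsum_app {X} (g : X -> R) l1 l2 : lsum g (l1 ++ l2) = lsum g l1 + lsum g l2.
Proof. induction l1; simpl; [lra|]. rewrite IHl1. lra. Qed.

Lemma lsum_map {X Y} (g : Y -> R) (f : X -> Y) l : lsum g (map f l) = lsum (fun x => g (f x)) l.
Proof. induction l; simpl; [reflexivity|]. rewrite IHl. reflexivity. Qed.

Lemma sum_lsum f n : sum_f_R0 f n = lsum f (seq 0 (S n)).
Proof.
  induction n; [simpl; lra|].
  change (sum_f_R0 f (S n)) with (sum_f_R0 f n + f (S n)).
  rewrite IHn, (seq_S (S n) 0), lsum_app. simpl. lra.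
Qed.

Lemma lsum_nonneg {X} (g : X -> R) l : (forall x, 0 <= g x) -> 0 <= lsum g l.
Proof. intro H. induction l; simpl; [lra|]. specialize (H a). lra. Qed.

Lemma lsum_le {X} (g h : X -> R) l : (forall x, In x l -> g x <= h x) -> lsum g l <= lsum h l.
Proof.
  induction l; simpl; intros H; [lra|].
  assert (g a <= h a) by auto. assert (lsum g l <= lsum h l) by auto. lra.
Qed.

Lemma lsum_scal {X} (g : X -> R) c l : lsum (fun x => c * g x) l = c * lsum g l.
Proof. induction l; simpl; [lra|]. rewrite IHl. lra. Qed.

Lemma lsum_plus {X} (g h : X -> R) l : lsum (fun x => g x + h x) l = lsum g l + lsum h l.
Proof. induction l; simpl; [lra|]. rewrite IHl. lra. Qed.

Lemma lsum_filter {X} (g : X -> R) (f : X -> bool) l :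
  lsum g l = lsum g (filter f l) + lsum g (filter (fun x => negb (f x)) l).
Proof. induction l; simpl; [lra|]. destruct (f a); simpl; rewrite IHl; lra. Qed.

Lemma lsum_sub {X} (g : X -> R) (P Q : list X) :
  (forall x, 0 <= g x) -> NoDup P -> (forall x, In x P -> In x Q) -> lsum g P <= lsum g Q.
Proof.
  intros Hg. revert Q. induction P as [|a P IH]; intros Q HN HI; simpl.
  - apply lsum_nonneg, Hg.
  - inversion HN; subst.
    destruct (in_split a Q) as [Q1 [Q2 ->]]. { apply HI; left; reflexivity. }
    rewrite lsum_app. simpl.
    assert (lsum g P <= lsum g (Q1 ++ Q2)).
    { apply IH; [assumption|]. intros x Hx. assert (In x (Q1 ++ a :: Q2)) by (apply HI; right; exact Hx).
      apply in_app_or in H. apply in_or_app. destruct H as [H|[H|H]]; auto. subst. contradiction. }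
    rewrite lsum_app in H. lra.
Qed.

Lemma lsum_prod {X Y} (g : X * Y -> R) l1 l2 :
  lsum g (list_prod l1 l2) = lsum (fun a => lsum (fun b => g (a, b)) l2) l1.
Proof.
  induction l1; simpl; [reflexivity|]. rewrite lsum_app, lsum_map, IHl1. reflexivity.
Qed.

Lemma sum_nonneg f n : (forall i, 0 <= f i) -> 0 <= sum_f_R0 f n.
Proof. intro H. rewrite sum_lsum. apply lsum_nonneg, H. Qed.

Lemma sum_le f g n : (forall i, f i <= g i) -> sum_f_R0 f n <= sum_f_R0 g n.
Proof. intro H. rewrite !sum_lsum. apply lsum_le. auto. Qed.

Lemma sum_mono f n m : (forall i, 0 <= f i) -> (n <= m)%nat -> sum_f_R0 f n <= sum_f_R0 f m.
Proof.
  intros H Hnm. induction Hnm; [lra|]. simpl. specialize (H (S m)). lra.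
Qed.

Lemma sum_term f n i : (forall i, 0 <= f i) -> (i <= n)%nat -> f i <= sum_f_R0 f n.
Proof.
  intros H Hi. apply Rle_trans with (sum_f_R0 f i).
  - destruct i; simpl; [lra|]. pose proof (sum_nonneg f i H). lra.
  - apply sum_mono; assumption.
Qed.

Lemma sum_cons f n : sum_f_R0 f (S n) = f 0%nat + sum_f_R0 (fun i => f (S i)) n.
Proof. induction n; simpl in *; [lra|]. rewrite IHn. lra. Qed.

Lemma geo n : sum_f_R0 (fun i => (/2)^i) n <= 2.
Proof.
  rewrite tech3 by lra. assert (0 <= (/2)^(S n)) by (apply pow_le; lra).
  replace (1 - /2) with (/2) by lra. unfold Rdiv. rewrite Rinv_inv. lra.
Qed.

Lemma geoK K n : sum_f_R0 (fun i => (/2)^(i + K)) n <= 2 * (/2)^K.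
Proof.
  assert (E: sum_f_R0 (fun i => (/2)^(i + K)) n = sum_f_R0 (fun i => (/2)^i * (/2)^K) n).
  { apply sum_eq. intros. apply pow_add. }
  rewrite E, <- scal_sum. pose proof (geo n). assert (0 < (/2)^K) by (apply pow_lt; lra).
  rewrite (Rmult_comm 2). apply Rmult_le_compat_l; [lra | exact H].
Qed.

Lemma small_pow eps : 0 < eps -> exists K, 2 * (/2)^K < eps.
Proof.
  intro H. destruct (pow_lt_1_zero (/2)) with (y := eps / 2) as [K HK].
  - rewrite Rabs_right; lra.
  - lra.
  - exists K. specialize (HK K (le_n K)). rewrite Rabs_right in HK. lra.
    apply Rle_ge, pow_le. lra.
Qed.

Lemma w_repeat n : w (repeat false n) = (/2)^n.
Proof. unfold cyl_weight. rewrite repeat_length. reflexivity. Qed.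

Lemma le_eps a b : (forall eps, 0 < eps -> a <= b + eps) -> a <= b.
Proof.
  intro H. destruct (Rle_or_lt a b); [assumption|].
  specialize (H ((a - b)/2)). lra.
Qed.

Lemma om_exists S : exists r, outer_measure_is S r.
Proof.
  set (E := fun y => exists c, covers c S /\ forall n, sum_f_R0 (fun i => w (c i)) n <= - y).
  assert (HE : forall y, E y -> y < 0).
  { intros y [c [_ Hc]]. specialize (Hc 0%nat). simpl in Hc. pose proof (w_pos (c 0%nat)). lra. }
  assert (Hb : bound E). { exists 0. intros y Hy. apply HE in Hy. lra. }
  assert (Hne : exists y, E y).
  { exists (-2). exists (fun i => repeat false i). split.
    - intros x _. exists 0%nat. intros i Hi. simpl in Hi. lia.
    - intro n. replace (- -2) with 2 by lra. eapply Rle_trans; [|apply (geo n)].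
      right. apply sum_eq. intros. apply w_repeat. }
  destruct (completeness E Hb Hne) as [M [HM1 HM2]].
  exists (- M). split.
  - intros c v Hc Hv. assert (E (- v)) by (exists c; split; [assumption|]; intro n; rewrite Ropp_involutive; apply Hv).
    apply HM1 in H. lra.
  - intros eps Heps. apply NNPP. intro Hno.
    assert (M <= M - eps); [|lra].
    apply HM2. intros y [c [Hc Hs]].
    destruct (Rle_or_lt y (M - eps)) as [|Hlt]; [assumption|].
    exfalso. apply Hno. exists c. split; [assumption|]. intro n. specialize (Hs n). lra.
Qed.

Lemma om_unique S r1 r2 : outer_measure_is S r1 -> outer_measure_is S r2 -> r1 = r2.
Proof.
  intros [H1a H1b] [H2a H2b].
  assert (forall ra rb, (forall c v, covers c S -> (forall n, sum_f_R0 (fun i => w (c i)) n <= v) -> ra <= v) ->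
    (forall eps, 0 < eps -> exists c, covers c S /\ forall n, sum_f_R0 (fun i => w (c i)) n <= rb + eps) -> ra <= rb).
  { intros ra rb Ha Hb. apply le_eps. intros eps Heps. destruct (Hb eps Heps) as [c [Hc Hs]].
    apply (Ha c); assumption. }
  apply Rle_antisym; apply H; assumption.
Qed.

Definition m (S : CSet) : R := proj1_sig (constructive_indefinite_description _ (om_exists S)).

Lemma m_spec S : outer_measure_is S (m S).
Proof. unfold m. destruct (constructive_indefinite_description _ _). assumption. Qed.

Lemma m_eq S r : outer_measure_is S r -> m S = r.
Proof. intro H. apply (om_unique S); [apply m_spec | exact H]. Qed.

Lemma m_le S c v : covers c S -> (forall n, sum_f_R0 (fun i => w (c i)) n <= v) -> m S <= v.
Proof. intros. destruct (m_spec S) as [H1 _]. eapply H1; eassumption. Qed.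

Lemma m_approx S eps : 0 < eps -> exists c, covers c S /\ forall n, sum_f_R0 (fun i => w (c i)) n <= m S + eps.
Proof. intros. destruct (m_spec S) as [_ H2]. apply H2. assumption. Qed.

Lemma m_nonneg S : 0 <= m S.
Proof.
  apply le_eps. intros eps Heps. destruct (m_approx S eps Heps) as [c [_ Hc]].
  specialize (Hc 0%nat). simpl in Hc. pose proof (w_pos (c 0%nat)). lra.
Qed.

Lemma m_mono (S T : CSet) : (forall x, S x -> T x) -> m S <= m T.
Proof.
  intro H. apply le_eps. intros eps Heps. destruct (m_approx T eps Heps) as [c [Hc Hs]].
  apply (m_le S c); [|assumption]. intros x Hx. apply Hc, H, Hx.
Qed.

Lemma m_ext (S T : CSet) : (forall x, S x <-> T x) -> m S = m T.
Proof. intro H. apply Rle_antisym; apply m_mono; intro x; apply H. Qed.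

Lemma junk_sum K n : sum_f_R0 (fun i => w (repeat false (i + K))) n <= 2 * (/2)^K.
Proof. eapply Rle_trans; [|apply (geoK K n)]. right. apply sum_eq. intros. apply w_repeat. Qed.

Lemma m_empty (S : CSet) : (forall x, ~ S x) -> m S = 0.
Proof.
  intro H. apply Rle_antisym; [|apply m_nonneg]. apply le_eps. intros eps Heps.
  destruct (small_pow eps Heps) as [K HK].
  apply (m_le S (fun i => repeat false (i + K))).
  - intros x Hx. exfalso. apply (H x Hx).
  - intro n. pose proof (junk_sum K n). lra.
Qed.

Lemma m_cyl_le u : m (cyl u) <= w u.
Proof.
  apply le_eps. intros eps Heps. destruct (small_pow eps Heps) as [K HK].
  apply (m_le _ (fun i => match i with O => u | S j => repeat false (j + K) end)).
  - intros x Hx. exists 0%nat. exact Hx.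
  - intro n. destruct n. { simpl. lra. }
    rewrite sum_cons. pose proof (junk_sum K n). cbv beta. lra.
Qed.

Lemma half_sum n : sum_f_R0 (fun i => (/2)^(S i)) n <= 1.
Proof.
  assert (E : sum_f_R0 (fun i => (/2)^(S i)) n = sum_f_R0 (fun i => (/2)^i * (/2)) n).
  { apply sum_eq. intros. simpl. lra. }
  rewrite E, <- scal_sum. pose proof (geo n). 
  assert (H' : sum_f_R0 (pow (/2)) n <= 2) by exact H. lra.
Qed.

Lemma m_csub (Z : CSet) (T : nat -> CSet) V :
  (forall x, Z x -> exists i, T i x) ->
  (forall n, sum_f_R0 (fun i => m (T i)) n <= V) -> m Z <= V.
Proof.
  intros HST HV. apply le_eps. intros eps Heps.
  assert (Hap : forall i, exists c, covers c (T i) /\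
      forall n, sum_f_R0 (fun j => w (c j)) n <= m (T i) + eps * (/2)^(S i)).
  { intro i. apply m_approx. assert (0 < (/2)^(S i)) by (apply pow_lt; lra). nra. }
  set (C := fun i => proj1_sig (constructive_indefinite_description _ (Hap i))).
  assert (HC : forall i, covers (C i) (T i) /\
      forall n, sum_f_R0 (fun j => w (C i j)) n <= m (T i) + eps * (/2)^(S i)).
  { intro i. unfold C. destruct (constructive_indefinite_description _ _). assumption. }
  set (g := fun p : nat * nat => w (C (fst p) (snd p))).
  apply (m_le Z (fun k => C (fst (Cantor.of_nat k)) (snd (Cantor.of_nat k)))).
  - intros x Hx. destruct (HST x Hx) as [i Hi]. destruct (proj1 (HC i) x Hi) as [j Hj].
    exists (Cantor.to_nat (i, j)). rewrite Cantor.cancel_of_to. exact Hj.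
  - intro n. rewrite sum_lsum.
    change (lsum (fun k => g (Cantor.of_nat k)) (seq 0 (S n)) <= V + eps).
    rewrite <- lsum_map.
    apply Rle_trans with (lsum g (list_prod (seq 0 (S n)) (seq 0 (S n)))).
    + apply lsum_sub.
      * intro. apply Rlt_le, w_pos.
      * apply Injective_map_NoDup; [|apply seq_NoDup].
        intros a b Hab. rewrite <- (Cantor.cancel_to_of a), <- (Cantor.cancel_to_of b), Hab. reflexivity.
      * intros p Hp. apply in_map_iff in Hp. destruct Hp as [k [Hk Hk2]]. apply in_seq in Hk2.
        destruct p as [i j]. pose proof (Cantor.to_nat_non_decreasing i j).
        rewrite <- Hk, Cantor.cancel_to_of in H. apply in_prod; apply in_seq; lia.
    + rewrite lsum_prod.
      apply Rle_trans with (lsum (fun i => m (T i) + eps * (/2)^(S i)) (seq 0 (S n))).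
      * apply lsum_le. intros i _. unfold g. cbn [fst snd]. rewrite <- sum_lsum. apply (proj2 (HC i)).
      * rewrite lsum_plus, lsum_scal, <- !sum_lsum. pose proof (HV n). pose proof (half_sum n). nra.
Qed.

Lemma m_sub2 (Z S1 S2 : CSet) : (forall x, Z x -> S1 x \/ S2 x) -> m Z <= m S1 + m S2.
Proof.
  intro H. apply (m_csub Z (fun i => match i with O => S1 | 1%nat => S2 | _ => fun _ => False end)).
  - intros x Hx. destruct (H x Hx); [exists 0%nat | exists 1%nat]; assumption.
  - intro n. pose proof (m_nonneg S1). pose proof (m_nonneg S2).
    assert (He : m (fun _ => False) = 0) by (apply m_empty; auto).
    destruct n; simpl; [lra|]. induction n; simpl in *; [lra|]. rewrite He. lra.
Qed.

Lemma pre_refl s : pfx s s.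
Proof. exists []. rewrite app_nil_r. reflexivity. Qed.

Lemma pre_trans a b c : pfx a b -> pfx b c -> pfx a c.
Proof. intros [r1 ->] [r2 ->]. exists (r1 ++ r2). rewrite app_assoc. reflexivity. Qed.

Lemma pre_app s r : pfx s (s ++ r).
Proof. exists r. reflexivity. Qed.

Lemma pre_length s t : pfx s t -> (length s <= length t)%nat.
Proof. intros [r ->]. rewrite length_app. lia. Qed.

Lemma pre_snoc_inv c s b : pfx c (s ++ [b]) -> ~ pfx c s -> c = s ++ [b].
Proof.
  intros [r Hr] Hn. destruct r as [|x r'] using rev_ind.
  - rewrite app_nil_r in Hr. symmetry. exact Hr.
  - exfalso. apply Hn. rewrite app_assoc in Hr. apply app_inj_tail in Hr. destruct Hr as [Hr _].
    exists r'. exact Hr.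
Qed.

Lemma pre_snoc_pre s b c : pfx (s ++ [b]) c -> pfx s c.
Proof. intro H. eapply pre_trans; [|exact H]. apply pre_app. Qed.

Lemma pre_snoc_bit s b1 b2 c : pfx (s ++ [b1]) c -> pfx (s ++ [b2]) c -> b1 = b2.
Proof.
  intros [r1 H1] [r2 H2]. rewrite H1 in H2. rewrite <- !app_assoc in H2. apply app_inv_head in H2.
  simpl in H2. inversion H2. reflexivity.
Qed.

Lemma pre_strict s c : pfx s c -> s <> c -> exists b, pfx (s ++ [b]) c.
Proof.
  intros [r ->] Hne. destruct r as [|b r]. { rewrite app_nil_r in Hne. congruence. }
  exists b. exists r. rewrite <- app_assoc. reflexivity.
Qed.

Definition cw (s c : list bool) : R :=
  if excluded_middle_informative (pfx c s) then w s
  else if excluded_middle_informative (pfx s c) then w c else 0.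

Lemma cw_nonneg s c : 0 <= cw s c.
Proof. unfold cw. destruct excluded_middle_informative; [apply Rlt_le, w_pos|].
  destruct excluded_middle_informative; [apply Rlt_le, w_pos| lra]. Qed.

Lemma cw_le s c : cw s c <= w c.
Proof. unfold cw. destruct excluded_middle_informative as [H|H]; [apply w_pre_le, H|].
  destruct excluded_middle_informative; [lra| apply Rlt_le, w_pos]. Qed.

Lemma cw_pre s c : pfx c s -> cw s c = w s.
Proof. intro H. unfold cw. destruct excluded_middle_informative; [reflexivity|contradiction]. Qed.

Lemma cw_child_val s c b : ~ pfx c s -> pfx (s ++ [b]) c -> cw (s ++ [b]) c = w c.
Proof.
  intros H1 H2. unfold cw. destruct excluded_middle_informative as [H|H].
  - apply pre_snoc_inv in H; [|assumption]. subst. reflexivity.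
  - destruct excluded_middle_informative; [reflexivity|contradiction].
Qed.

Lemma cw_child_zero s c b : ~ pfx c s -> ~ pfx (s ++ [b]) c -> cw (s ++ [b]) c = 0.
Proof.
  intros H1 H2. unfold cw. destruct excluded_middle_informative as [H|H].
  - apply pre_snoc_inv in H; [|assumption]. subst. exfalso. apply H2, pre_refl.
  - destruct excluded_middle_informative; [contradiction|reflexivity].
Qed.

Lemma cw_add s c : cw s c = cw (s ++ [false]) c + cw (s ++ [true]) c.
Proof.
  destruct (classic (pfx c s)) as [H|H].
  - rewrite (cw_pre s c H), (cw_pre (s++[false]) c), (cw_pre (s++[true]) c)
      by (eapply pre_trans; [exact H|apply pre_app]).
    rewrite !w_snoc. lra.
  - destruct (classic (pfx s c)) as [H2|H2].
    + assert (Hne : s <> c) by (intro; subst; apply H, pre_refl).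
      destruct (pre_strict s c H2 Hne) as [b Hb].
      unfold cw at 1. destruct excluded_middle_informative; [contradiction|].
      destruct excluded_middle_informative; [|contradiction].
      destruct b.
      * rewrite (cw_child_val s c true H Hb), (cw_child_zero s c false H). lra.
        intro Hf. pose proof (pre_snoc_bit _ _ _ _ Hb Hf). discriminate.
      * rewrite (cw_child_val s c false H Hb), (cw_child_zero s c true H). lra.
        intro Hf. pose proof (pre_snoc_bit _ _ _ _ Hb Hf). discriminate.
    + unfold cw at 1. destruct excluded_middle_informative; [contradiction|].
      destruct excluded_middle_informative; [contradiction|].
      rewrite !cw_child_zero; try assumption; try lra;
        intro Hf; apply H2; eapply pre_snoc_pre; exact Hf.
Qed.

(* limit of an increasing sequence of strings *)
Definition slim (g : nat -> list bool) : Cantor := fun i => nth i (g (S i)) false.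

Lemma pre_seq (g : nat -> list bool) : (forall k, pfx (g k) (g (S k))) ->
  forall k k', (k <= k')%nat -> pfx (g k) (g k').
Proof.
  intros H k k' Hk. induction Hk; [apply pre_refl|]. eapply pre_trans; [exact IHHk| apply H].
Qed.

Lemma nth_pre s t i : pfx s t -> (i < length s)%nat -> nth i t false = nth i s false.
Proof. intros [r ->] Hi. apply app_nth1, Hi. Qed.

Lemma slim_cyl (g : nat -> list bool) : (forall k, pfx (g k) (g (S k))) ->
  (forall k, (k <= length (g k))%nat) -> forall k, cyl (g k) (slim g).
Proof.
  intros H1 H2 k i Hi. unfold slim.
  destruct (le_lt_dec (S i) k) as [Hle|Hlt].
  - apply nth_pre; [apply pre_seq; [exact H1|exact Hle]|]. specialize (H2 (S i)). lia.
  - symmetry. apply nth_pre; [|exact Hi]. apply pre_seq; [exact H1|lia].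
Qed.

Lemma cyl_lower u c v : covers c (cyl u) ->
  (forall n, sum_f_R0 (fun i => w (c i)) n <= v) -> w u <= v.
Proof.
  intros Hc Hv. destruct (Rle_or_lt (w u) v) as [|Hlt]; [assumption|exfalso].
  set (f := fun n s => sum_f_R0 (fun i => cw s (c i)) n).
  set (bad := fun s => forall n, f n s < w s).
  assert (Hf_mono : forall n n' s, (n <= n')%nat -> f n s <= f n' s).
  { intros. apply sum_mono; [intro; apply cw_nonneg|assumption]. }
  assert (Hstep : forall s, bad s -> bad (s ++ [false]) \/ bad (s ++ [true])).
  { intros s Hs. apply NNPP. intro Hn. apply not_or_and in Hn. destruct Hn as [H0 H1].
    apply not_all_ex_not in H0. apply not_all_ex_not in H1.
    destruct H0 as [n0 H0]. destruct H1 as [n1 H1]. apply Rnot_lt_le in H0, H1.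
    specialize (Hs (Nat.max n0 n1)).
    assert (Hadd : f (Nat.max n0 n1) s = f (Nat.max n0 n1) (s ++ [false]) + f (Nat.max n0 n1) (s ++ [true])).
    { unfold f. rewrite <- sum_plus. apply sum_eq. intros. apply cw_add. }
    pose proof (Hf_mono n0 (Nat.max n0 n1) (s ++ [false]) (Nat.le_max_l _ _)).
    pose proof (Hf_mono n1 (Nat.max n0 n1) (s ++ [true]) (Nat.le_max_r _ _)).
    rewrite !w_snoc in *. lra. }
  assert (Hu : bad u).
  { intro n. apply Rle_lt_trans with v; [|exact Hlt]. eapply Rle_trans; [|apply (Hv n)].
    apply sum_le. intro. apply cw_le. }
  set (nb := fun s => if excluded_middle_informative (bad (s ++ [false])) then false else true).
  set (g := fix g k := match k with O => u | S k' => g k' ++ [nb (g k')] end).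
  assert (Hg1 : forall k, pfx (g k) (g (S k))) by (intro; apply pre_app).
  assert (Hg2 : forall k, length (g k) = (length u + k)%nat).
  { induction k; simpl; [lia|]. rewrite length_app. simpl. simpl in IHk. lia. }
  assert (Hgb : forall k, bad (g k)).
  { induction k; [exact Hu|]. change (g (S k)) with (g k ++ [nb (g k)]). unfold nb.
    destruct excluded_middle_informative; [assumption|].
    destruct (Hstep _ IHk); [contradiction|assumption]. }
  assert (Hx : forall k, cyl (g k) (slim g)).
  { apply slim_cyl; [assumption|]. intro k. rewrite Hg2. lia. }
  destruct (Hc (slim g) (Hx 0%nat)) as [i Hi].
  set (k := length (c i)).
  assert (Hp : pfx (c i) (g k)).
  { apply (cyl_two _ _ (slim g)); [exact Hi| apply Hx|]. rewrite Hg2. unfold k. lia. }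
  specialize (Hgb k i). unfold f in Hgb.
  pose proof (sum_term (fun j => cw (g k) (c j)) i i (fun j => cw_nonneg _ _) (le_n i)).
  cbv beta in H. rewrite cw_pre in H by exact Hp. lra.
Qed.

Lemma m_cyl u : m (cyl u) = w u.
Proof.
  apply Rle_antisym; [apply m_cyl_le|]. apply le_eps. intros eps Heps.
  destruct (m_approx (cyl u) eps Heps) as [c [Hc Hs]]. eapply cyl_lower; eassumption.
Qed.

Definition dd (A : CSet) (s : list bool) : R := m (inter A (cyl s)).
Definition DD (A : CSet) (s : list bool) : R := dd A s / w s.

Lemma dd_le A s : dd A s <= w s.
Proof. unfold dd. rewrite <- (m_cyl s). apply m_mono. intros x [_ H]. exact H. Qed.

Lemma DD_nonneg A s : 0 <= DD A s.
Proof. unfold DD. apply Rmult_le_pos; [apply m_nonneg| apply Rlt_le, Rinv_0_lt_compat, w_pos]. Qed.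

Lemma DD_le1 A s : DD A s <= 1.
Proof. unfold DD. pose proof (w_pos s). apply Rmult_le_reg_r with (w s); [lra|]. unfold Rdiv.
  rewrite Rmult_assoc, Rinv_l by lra. rewrite Rmult_1_r, Rmult_1_l. apply dd_le. Qed.

Lemma dd_eq A s : dd A s = DD A s * w s.
Proof. unfold DD. pose proof (w_pos s). field. lra. Qed.

Lemma dd_child A s : dd A s <= dd A (s ++ [false]) + dd A (s ++ [true]).
Proof.
  apply m_sub2. intros x [Ha Hc]. apply cyl_extend in Hc.
  destruct (x (length s)); [right|left]; split; assumption.
Qed.

Lemma DD_child A s : DD A s <= (DD A (s ++ [false]) + DD A (s ++ [true])) / 2.
Proof.
  pose proof (dd_child A s). rewrite !dd_eq, !w_snoc in H. pose proof (w_pos s).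
  set (a := DD A s) in *. set (b := DD A (s ++ [false])) in *. set (c := DD A (s ++ [true])) in *.
  set (v := w s) in *. nra.
Qed.

Lemma DD_child_ge A s b : 2 * DD A s - 1 <= DD A (s ++ [b]).
Proof.
  pose proof (DD_child A s). pose proof (DD_le1 A (s ++ [false])). pose proof (DD_le1 A (s ++ [true])).
  destruct b; lra.
Qed.

Lemma DD_child_max A s : exists b, DD A s <= DD A (s ++ [b]).
Proof.
  pose proof (DD_child A s).
  destruct (Rle_or_lt (DD A (s ++ [false])) (DD A (s ++ [true]))); [exists true | exists false]; lra.
Qed.

Lemma density (S : CSet) s delta : 0 < delta < 1 -> 0 < m (inter S (cyl s)) ->
  exists r, (1 - delta) * w (s ++ r) < m (inter S (cyl (s ++ r))).
Proof.
  intros Hd Hmu. apply NNPP. intro Hno.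
  assert (H : forall r, m (inter S (cyl (s ++ r))) <= (1 - delta) * w (s ++ r)).
  { intro r. apply Rnot_lt_le. intro Hl. apply Hno. exists r. exact Hl. }
  set (mu := m (inter S (cyl s))) in *.
  destruct (m_approx (inter S (cyl s)) (mu * delta / 2)) as [c [Hc Hs]].
  { apply Rmult_lt_0_compat; [nra|lra]. }
  set (T := fun i x => S x /\ cyl s x /\ cyl (c i) x).
  assert (HT : forall i, m (T i) <= (1 - delta) * w (c i)).
  { intro i. destruct (classic (exists x, T i x)) as [[x [Hx1 [Hx2 Hx3]]]|Hn].
    - destruct (le_lt_dec (length s) (length (c i))) as [Hl|Hl].
      + destruct (cyl_two _ _ _ Hx2 Hx3 Hl) as [r Hr]. rewrite Hr. eapply Rle_trans; [|apply H].
        apply m_mono. intros y [Hy1 [Hy2 Hy3]]. split; [exact Hy1|]. rewrite <- Hr. exact Hy3.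
      + assert (Hp : pfx (c i) s) by (apply (cyl_two _ _ x); [exact Hx3|exact Hx2|lia]).
        apply Rle_trans with ((1 - delta) * w (s ++ [])).
        * eapply Rle_trans; [|apply H]. apply m_mono. intros y [Hy1 [Hy2 Hy3]]. split; [exact Hy1|].
          rewrite app_nil_r. exact Hy2.
        * rewrite app_nil_r. apply Rmult_le_compat_l; [lra|]. apply w_pre_le, Hp.
    - rewrite m_empty. { pose proof (w_pos (c i)). nra. }
      intros x Hx. apply Hn. exists x. exact Hx. }
  assert (Hle : mu <= (1 - delta) * (mu + mu * delta / 2)).
  { apply (m_csub _ T).
    - intros x [Hx1 Hx2]. destruct (Hc x (conj Hx1 Hx2)) as [i Hi]. exists i. repeat split; assumption.
    - intro n. apply Rle_trans with (sum_f_R0 (fun i => w (c i) * (1 - delta)) n).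
      + apply sum_le. intro i. rewrite Rmult_comm. apply HT.
      + rewrite <- scal_sum. apply Rmult_le_compat_l; [lra|]. apply Hs. }
  nra.
Qed.

Lemma Phi_char A x : Phi A x <-> Un_cv (fun n => DD A (restr x n)) 1.
Proof.
  split.
  - intros [d [Hd Hc]] eps Heps. destruct (Hc eps Heps) as [N HN]. exists N. intros n Hn.
    specialize (HN n Hn). unfold DD, dd. rewrite (m_eq _ _ (Hd n)). exact HN.
  - intro H. exists (fun n => dd A (restr x n)). split.
    + intro n. apply m_spec.
    + exact H.
Qed.

Lemma cyl_open t : is_open (cyl t).
Proof. intros x Hx. exists (length t). intros y Hy. eapply cyl_agree; eassumption. Qed.

Lemma deep A : measurable A -> empty_interior (Phi A) ->
  forall t delta, 0 < delta < 1 -> exists r, DD A (t ++ r) < delta.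
Proof.
  intros HA HE t delta Hd. apply NNPP. intro Hno.
  assert (H : forall r, delta <= DD A (t ++ r)).
  { intro r. apply Rnot_lt_le. intro Hl. apply Hno. exists r. exact Hl. }
  set (S := diff (cyl t) A).
  assert (Hcomp : forall u, m (diff (cyl u) A) = w u - dd A u).
  { intro u. pose proof (HA (cyl u) (m (cyl u)) (m (inter (cyl u) A)) (m (diff (cyl u) A))
      (m_spec _) (m_spec _) (m_spec _)).
    rewrite m_cyl in H0. unfold dd.
    rewrite (m_ext (inter A (cyl u)) (inter (cyl u) A)); [lra|].
    intro y. unfold inter. tauto. }
  assert (HS : m (inter S (cyl t)) <= 0).
  { apply Rnot_lt_le. intro Hpos. destruct (density S t delta Hd Hpos) as [r Hr].
    assert (m (inter S (cyl (t ++ r))) <= m (diff (cyl (t ++ r)) A)).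
    { apply m_mono. intros y [[_ Hy1] Hy2]. split; assumption. }
    rewrite Hcomp, dd_eq in H0. specialize (H r). pose proof (w_pos (t ++ r)).
    set (v := w (t ++ r)) in *. set (D := DD A (t ++ r)) in *. nra. }
  assert (Hone : forall r, DD A (t ++ r) = 1).
  { intro r. apply Rle_antisym; [apply DD_le1|].
    assert (m (diff (cyl (t ++ r)) A) <= m (inter S (cyl t))).
    { apply m_mono. intros y [Hy1 Hy2]. split; [split; [eapply cyl_app; exact Hy1|exact Hy2]|].
      eapply cyl_app; exact Hy1. }
    rewrite Hcomp, dd_eq in H0. pose proof (w_pos (t ++ r)). pose proof (m_nonneg (inter S (cyl t))).
    set (v := w (t ++ r)) in *. set (D := DD A (t ++ r)) in *. nra. }
  apply (HE (cyl t) (cyl_open t)) with (ext0 t); [|apply cyl_ext0].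
  intros x Hx. apply Phi_char. intros eps Heps. exists (length t). intros n Hn.
  assert (Hp : pfx t (restr x n)).
  { apply cyl_restr in Hx. rewrite <- Hx. apply restr_pre. lia. }
  destruct Hp as [r Hr]. rewrite Hr, Hone. unfold R_dist. rewrite Rminus_diag, Rabs_R0. exact Heps.
Qed.

Lemma least_nat (P : nat -> Prop) : (exists n, P n) -> exists n, P n /\ forall k, (k < n)%nat -> ~ P k.
Proof.
  intros [n Hn]. induction n as [n IH] using lt_wf_ind.
  destruct (classic (exists k, (k < n)%nat /\ P k)) as [[k [Hk1 Hk2]]|Hno].
  - exact (IH k Hk1 Hk2).
  - exists n. split; [exact Hn|]. intros k Hk Pk. apply Hno. exists k. split; assumption.
Qed.

Lemma firstn_S_snoc (l : list bool) k : (k < length l)%nat -> firstn (S k) l = firstn k l ++ [nth k l false].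
Proof.
  revert k. induction l as [|a l IH]; intros k Hk; simpl in Hk; [lia|].
  destruct k; [reflexivity|].
  change (firstn (S (S k)) (a :: l)) with (a :: firstn (S k) l).
  change (nth (S k) (a :: l) false) with (nth k l false).
  rewrite IH by lia. reflexivity.
Qed.

Lemma pfx_len_eq a b c : pfx a c -> pfx b c -> length a = length b -> a = b.
Proof.
  intros [r1 H1] [r2 H2] Hl. rewrite H1 in H2.
  assert (firstn (length a) (a ++ r1) = firstn (length a) (b ++ r2)) by (rewrite H2; reflexivity).
  rewrite !firstn_app, Hl, Nat.sub_diag, !firstn_0, !app_nil_r in H.
  rewrite <- Hl, firstn_all in H. rewrite Hl, firstn_all in H. exact H.
Qed.

Definition Seg (A : CSet) (t r : list bool) (th : R) : Prop :=
  forall k, (k <= length r)%nat -> 1 - DD A (t ++ firstn k r) <= th.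

Lemma seg_end A t r th : Seg A t r th -> 1 - DD A (t ++ r) <= th.
Proof. intro H. specialize (H (length r) (le_n _)). rewrite firstn_all in H. exact H. Qed.

Lemma seg_start A t r th : Seg A t r th -> 1 - DD A t <= th.
Proof. intro H. specialize (H 0%nat (Nat.le_0_l _)). rewrite firstn_0, app_nil_r in H. exact H. Qed.

Lemma seg_mono A t r th th' : th <= th' -> Seg A t r th -> Seg A t r th'.
Proof. intros Hle H k Hk. specialize (H k Hk). lra. Qed.

Lemma seg_comp A t r1 r2 th : Seg A t r1 th -> Seg A (t ++ r1) r2 th -> Seg A t (r1 ++ r2) th.
Proof.
  intros H1 H2 k Hk. rewrite length_app in Hk. rewrite firstn_app.
  destruct (le_lt_dec k (length r1)) as [Hl|Hl].
  - replace (k - length r1)%nat with 0%nat by lia. rewrite firstn_0, app_nil_r. apply H1, Hl.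
  - rewrite firstn_all2 by lia. rewrite app_assoc. apply H2. lia.
Qed.

Lemma dip A eta t : 0 < eta < 1 -> measurable A -> empty_interior (Phi A) ->
  1 - DD A t < eta -> exists r, Seg A t r (2 * eta) /\ eta <= 1 - DD A (t ++ r).
Proof.
  intros He HA HE Ht. destruct (deep A HA HE t (1 - eta)) as [r0 Hr0]; [lra|].
  destruct (least_nat (fun k => (k <= length r0)%nat /\ eta <= 1 - DD A (t ++ firstn k r0))) as [k [[Hk1 Hk2] Hk3]].
  { exists (length r0). split; [lia|]. rewrite firstn_all. lra. }
  destruct k as [|k'].
  { rewrite firstn_0, app_nil_r in Hk2. lra. }
  assert (Hk' : 1 - DD A (t ++ firstn k' r0) < eta).
  { apply Rnot_le_lt. intro Hc. apply (Hk3 k'); [lia|]. split; [lia|exact Hc]. }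
  assert (Hd : 1 - DD A (t ++ firstn (S k') r0) <= 2 * (1 - DD A (t ++ firstn k' r0))).
  { rewrite firstn_S_snoc by lia. rewrite app_assoc. pose proof (DD_child_ge A (t ++ firstn k' r0) (nth k' r0 false)). lra. }
  exists (firstn (S k') r0). split; [|exact Hk2].
  intros k Hk. rewrite length_firstn in Hk. rewrite firstn_firstn. replace (Nat.min k (S k')) with k by lia.
  destruct (Nat.eq_dec k (S k')) as [->|Hne]; [lra|].
  apply Rlt_le. apply Rlt_le_trans with eta; [|lra].
  apply Rnot_le_lt. intro Hc. apply (Hk3 k); [lia|]. split; [lia|exact Hc].
Qed.

Fixpoint l2p (s : list bool) : positive :=
  match s with [] => xH | true :: s' => xI (l2p s') | false :: s' => xO (l2p s') end.
Fixpoint p2l (p : positive) : list bool :=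
  match p with xH => [] | xI p' => true :: p2l p' | xO p' => false :: p2l p' end.
Lemma p2l_l2p s : p2l (l2p s) = s.
Proof. induction s as [|[|] s IH]; simpl; rewrite ?IH; reflexivity. Qed.
Lemma l2p_p2l p : l2p (p2l p) = p.
Proof. induction p; simpl; rewrite ?IHp; reflexivity. Qed.
Definition enc (n : nat) : list bool := p2l (Pos.of_succ_nat n).
Lemma enc_inj : Injective enc.
Proof.
  intros a b H. unfold enc in H. apply (f_equal l2p) in H. rewrite !l2p_p2l in H.
  apply SuccNat2Pos.inj, H.
Qed.
Lemma enc_surj s : exists n, enc n = s.
Proof.
  destruct (Pos2Nat.is_succ (l2p s)) as [n Hn]. exists n. unfold enc.
  rewrite (SuccNat2Pos.inv n (l2p s) Hn). apply p2l_l2p.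
Qed.

Lemma all_eq_sum (l : list (list bool)) u : NoDup l -> (forall v, In v l -> v = u) -> lsum w l <= w u.
Proof.
  intros Hn Hv. destruct l as [|a l]; simpl; [apply Rlt_le, w_pos|].
  destruct l as [|b l]; simpl.
  - rewrite (Hv a) by (left; reflexivity). lra.
  - exfalso. inversion Hn; subst. apply H1. left. rewrite (Hv a), (Hv b); [reflexivity| |]; simpl; auto.
Qed.

Lemma antichain K : forall u (l : list (list bool)), NoDup l ->
  (forall v, In v l -> pfx u v /\ (length v <= length u + K)%nat) ->
  (forall a b, In a l -> In b l -> pfx a b -> a = b) -> lsum w l <= w u.
Proof.
  induction K as [|K IH]; intros u l Hn Hv Hac.
  - destruct l as [|a l]; [simpl; apply Rlt_le, w_pos|].
    apply all_eq_sum; [exact Hn|]. intros v Hvl. destruct (Hv v Hvl) as [[r Hr] Hl].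
    rewrite Hr, length_app in Hl. destruct r; [rewrite Hr, app_nil_r; reflexivity|simpl in Hl; lia].
  - destruct (classic (In u l)) as [Hu|Hu].
    + apply all_eq_sum; [exact Hn|]. intros v Hvl. symmetry. apply Hac; auto. apply Hv, Hvl.
    + set (bitf := fun v : list bool => nth (length u) v false).
      assert (Hb : forall v, In v l -> pfx (u ++ [bitf v]) v).
      { intros v Hvl. destruct (Hv v Hvl) as [Hp _].
        destruct (pre_strict u v Hp) as [b [r Hr]]. { intro; subst; contradiction. }
        unfold bitf. rewrite Hr, <- app_assoc. rewrite app_nth2 by lia. rewrite Nat.sub_diag. simpl.
        exists r. rewrite <- app_assoc. reflexivity. }
      rewrite (lsum_filter w bitf l).
      assert (H1 : lsum w (filter bitf l) <= w (u ++ [true])).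
      { apply IH.
        - apply NoDup_filter, Hn.
        - intros v Hvl. apply filter_In in Hvl. destruct Hvl as [Hvl Hbv].
          specialize (Hb v Hvl). rewrite Hbv in Hb. split; [exact Hb|].
          destruct (Hv v Hvl) as [_ Hl]. rewrite length_app. simpl.
          pose proof (pre_length _ _ Hb). rewrite length_app in H. simpl in H.
          destruct Hb as [r Hr]. lia.
        - intros a b Ha Hb2. apply filter_In in Ha, Hb2. apply Hac; tauto. }
      assert (H2 : lsum w (filter (fun v => negb (bitf v)) l) <= w (u ++ [false])).
      { apply IH.
        - apply NoDup_filter, Hn.
        - intros v Hvl. apply filter_In in Hvl. destruct Hvl as [Hvl Hbv].
          specialize (Hb v Hvl). destruct (bitf v); [discriminate|]. split; [exact Hb|].
          destruct (Hv v Hvl) as [_ Hl]. rewrite length_app. simpl. lia.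
        - intros a b Ha Hb2. apply filter_In in Ha, Hb2. apply Hac; tauto. }
      rewrite !w_snoc in *. lra.
Qed.

Lemma exists_bound (l : list (list bool)) : exists K, forall v, In v l -> (length v <= K)%nat.
Proof.
  induction l as [|a l [K HK]]; [exists 0%nat; intros v []|].
  exists (Nat.max (length a) K). intros v [->|Hv]; [lia|]. specialize (HK v Hv). lia.
Qed.

Lemma lsum_if (P : list bool -> bool) c (l : list nat) :
  lsum (fun i => if P (enc i) then c * w (enc i) else 0) l = c * lsum w (filter P (map enc l)).
Proof.
  induction l as [|a l IH]; simpl; [lra|]. destruct (P (enc a)); simpl; rewrite IH; lra.
Qed.

Lemma restr_seg x u r k : cyl (u ++ r) x -> (k <= length r)%nat ->
  restr x (length u + k) = u ++ firstn k r.
Proof.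
  intros Hx Hk. apply cyl_restr in Hx. rewrite length_app in Hx.
  apply (pfx_len_eq _ _ (u ++ r)).
  - rewrite <- Hx. apply restr_pre. lia.
  - rewrite <- (firstn_skipn k r) at 2. rewrite app_assoc. apply pre_app.
  - rewrite length_restr, length_app, length_firstn. lia.
Qed.

Lemma climb_core A eta eps u : 0 < eta -> eta <= 1/8 -> 0 < eps -> 1 - DD A u <= 2 * eta ->
  exists r, Seg A u r (4 * eta) /\ 1 - DD A (u ++ r) < eps.
Proof.
  intros He1 He2 Heps Hu. apply NNPP. intro Hno.
  assert (Hno' : forall r, Seg A u r (4 * eta) -> eps <= 1 - DD A (u ++ r)).
  { intros r Hr. apply Rnot_lt_le. intro Hl. apply Hno. exists r. split; assumption. }
  clear Hno.
  set (R0 := fun x => cyl u x /\ forall k, 1 - DD A (restr x (length u + k)) <= 4 * eta).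
  set (Sset := inter A R0).
  assert (HS : m (inter Sset (cyl u)) <= 0).
  { apply Rnot_lt_le. intro Hpos.
    set (delta := Rmin eps (1/2)).
    assert (Hd : 0 < delta < 1) by (unfold delta; split; [apply Rmin_glb_lt; lra| pose proof (Rmin_r eps (1/2)); lra]).
    destruct (density Sset u delta Hd Hpos) as [r Hr].
    destruct (classic (exists x, inter Sset (cyl (u ++ r)) x)) as [[x [[HxA [Hxu Hxk]] Hxr]]|Hn].
    - assert (Hseg : Seg A u r (4 * eta)).
      { intros k Hk. rewrite <- (restr_seg x u r k Hxr Hk). apply Hxk. }
      specialize (Hno' r Hseg).
      assert (m (inter Sset (cyl (u ++ r))) <= dd A (u ++ r)).
      { apply m_mono. intros y [[Hy1 _] Hy2]. split; assumption. }
      rewrite dd_eq in H. pose proof (w_pos (u ++ r)). pose proof (Rmin_l eps (1/2)).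
      fold delta in H1. set (v := w (u ++ r)) in *. set (D := DD A (u ++ r)) in *.
      assert ((1 - delta) * v < D * v) by lra. assert (1 - delta < D) by nra. lra.
    - rewrite m_empty in Hr by (intros y Hy; apply Hn; exists y; exact Hy).
      pose proof (w_pos (u ++ r)). nra. }
  set (minbad := fun v => exists r, v = u ++ r /\ 4 * eta < 1 - DD A (u ++ r) /\
     forall k, (k < length r)%nat -> 1 - DD A (u ++ firstn k r) <= 4 * eta).
  set (isbad := fun v => if excluded_middle_informative (minbad v) then true else false).
  set (T := fun i => match i with O => inter Sset (cyl u)
                     | S j => fun x => minbad (enc j) /\ A x /\ cyl (enc j) x end).
  assert (Hcov : forall x, inter A (cyl u) x -> exists i, T i x).
  { intros x [HxA Hxu]. destruct (classic (forall k, 1 - DD A (restr x (length u + k)) <= 4 * eta)) as [Hall|Hn].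
    - exists 0%nat. simpl. split; [split; [exact HxA| split; assumption]| exact Hxu].
    - destruct (least_nat (fun k => 4 * eta < 1 - DD A (restr x (length u + k)))) as [k [Hk1 Hk2]].
      { apply not_all_ex_not in Hn. destruct Hn as [k Hk]. exists k. apply Rnot_le_lt, Hk. }
      assert (Hp : pfx u (restr x (length u + k))).
      { apply cyl_restr in Hxu. rewrite <- Hxu at 1. apply restr_pre. lia. }
      destruct Hp as [rr Hrr].
      destruct (enc_surj (restr x (length u + k))) as [j Hj].
      exists (S j). simpl. rewrite Hj. split; [|split; [exact HxA| apply restr_cyl]].
      exists rr. split; [exact Hrr|]. split; [rewrite <- Hrr; exact Hk1|].
      assert (Hlen : length rr = k).
      { apply (f_equal (@length bool)) in Hrr. rewrite length_restr, length_app in Hrr. lia. }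
      intros k' Hk'. rewrite <- (restr_seg x u rr k'); [| rewrite <- Hrr; apply restr_cyl | lia].
      apply Rnot_lt_le. apply Hk2. lia. }
  assert (HT : forall j, m (T (S j)) <= if isbad (enc j) then (1 - 4 * eta) * w (enc j) else 0).
  { intro j. simpl. unfold isbad. destruct excluded_middle_informative as [Hb|Hb].
    - apply Rle_trans with (dd A (enc j)).
      + apply m_mono. intros y [_ [Hy1 Hy2]]. split; assumption.
      + destruct Hb as [r [Hr1 [Hr2 _]]]. rewrite dd_eq, Hr1. pose proof (w_pos (u ++ r)).
        set (v := w (u ++ r)) in *. set (D := DD A (u ++ r)) in *. nra.
    - right. apply m_empty. intros y [Hy _]. contradiction. }
  assert (Hac : forall n, lsum w (filter isbad (map enc (seq 0 n))) <= w u).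
  { intro n. destruct (exists_bound (filter isbad (map enc (seq 0 n)))) as [K HK].
    assert (Hmb : forall v, In v (filter isbad (map enc (seq 0 n))) -> minbad v).
    { intros v Hv. apply filter_In in Hv. destruct Hv as [_ Hv]. unfold isbad in Hv.
      destruct excluded_middle_informative; [assumption|discriminate]. }
    apply (antichain K).
    - apply NoDup_filter, Injective_map_NoDup; [apply enc_inj| apply seq_NoDup].
    - intros v Hv. split; [destruct (Hmb v Hv) as [r [-> _]]; apply pre_app|]. specialize (HK v Hv). lia.
    - intros a b Ha Hb Hab. destruct (Hmb a Ha) as [ra [-> [Ha2 _]]]. destruct (Hmb b Hb) as [rb [-> [_ Hb3]]].
      destruct Hab as [q Hq]. rewrite <- app_assoc in Hq. apply app_inv_head in Hq.
      destruct q as [|c q]; [rewrite Hq, app_nil_r; reflexivity|].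
      exfalso. assert (Hl : (length ra < length rb)%nat) by (rewrite Hq, length_app; simpl; lia).
      specialize (Hb3 _ Hl). rewrite Hq, firstn_app, firstn_all, Nat.sub_diag, firstn_0, app_nil_r in Hb3. lra. }
  assert (Hle : dd A u <= (1 - 4 * eta) * w u).
  { apply (m_csub _ T); [exact Hcov|]. intro n. destruct n as [|n].
    - apply Rle_trans with 0; [exact HS|]. pose proof (w_pos u). apply Rmult_le_pos; lra.
    - rewrite sum_cons. apply Rle_trans with (0 + sum_f_R0 (fun j => if isbad (enc j) then (1 - 4 * eta) * w (enc j) else 0) n).
      + apply Rplus_le_compat; [exact HS|]. apply sum_le. exact HT.
      + rewrite Rplus_0_l, sum_lsum, lsum_if. apply Rmult_le_compat_l; [lra|]. apply Hac. }
  rewrite dd_eq in Hle. pose proof (w_pos u). set (v := w u) in *. set (D := DD A u) in *. nra.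
Qed.

Lemma climb A eta eps u : 0 < eta -> eta <= 1/8 -> 0 < eps -> 1 - DD A u <= 2 * eta ->
  exists r, r <> [] /\ Seg A u r (4 * eta) /\ 1 - DD A (u ++ r) < eps.
Proof.
  intros He1 He2 Heps Hu. destruct (DD_child_max A u) as [b Hb].
  destruct (climb_core A eta eps (u ++ [b])) as [r [Hr1 Hr2]]; try assumption; [lra|].
  exists ([b] ++ r). split; [discriminate|]. split.
  - apply seg_comp; [|exact Hr1]. intros k Hk. simpl in Hk. destruct k as [|[|]]; [| |lia]; simpl.
    + rewrite app_nil_r. lra.
    + lra.
  - rewrite app_assoc. exact Hr2.
Qed.

Lemma inv_small eps : 0 < eps -> exists K, / (INR K + 1) < eps.
Proof.
  intro H. destruct (archimed_cor1 eps H) as [N [HN1 HN2]]. exists N.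
  apply Rle_lt_trans with (/ INR N); [|exact HN1].
  apply Rinv_le_contravar; [apply lt_0_INR; lia| lra].
Qed.

Lemma Phi_Pi03 A : Pi03 (Phi A).
Proof.
  set (Fk := fun k N x => forall n, (N <= n)%nat -> Rabs (DD A (restr x n) - 1) < / (INR k + 1)).
  exists (fun k x => exists N, Fk k N x). split.
  - intro k. exists (Fk k). split; [|intro x; tauto].
    intros N x Hx. apply not_all_ex_not in Hx. destruct Hx as [n Hn].
    apply imply_to_and in Hn. destruct Hn as [Hn1 Hn2].
    exists n. intros y Hy HF. apply Hn2. rewrite (agree_restr n x y Hy). apply HF, Hn1.
  - intro x. rewrite Phi_char. split.
    + intros H k. destruct (H (/ (INR k + 1))) as [N HN].
      { apply Rinv_0_lt_compat. pose proof (pos_INR k). lra. }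
      exists N. intros n Hn. apply HN, Hn.
    + intros H eps Heps. destruct (inv_small eps Heps) as [K HK]. destruct (H K) as [N HN].
      exists N. intros n Hn. unfold R_dist. eapply Rlt_trans; [apply HN, Hn|exact HK].
Qed.

Open Scope nat_scope.

Section Sig.
Variable F : nat -> nat -> CSet.

Definition compat k n s := exists y, cyl s y /\ F k n y.
Definition cb k n s : bool := if excluded_middle_informative (compat k n s) then true else false.
Fixpoint fc k s n fuel : nat :=
  match fuel with O => n | S f => if cb k n s then n else fc k s (S n) f end.
Definition aa k j x := fc k (restr x j) 0 (S j).

Lemma fc_spec k s fuel : forall n, let r := fc k s n fuel in
  n <= r <= n + fuel /\ (forall i, n <= i < r -> ~ compat k i s) /\ (r < n + fuel -> compat k r s).
Proof.
  induction fuel as [|f IH]; intros n; simpl.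
  - split; [lia|]. split; [intros; lia|intros; lia].
  - unfold cb. destruct excluded_middle_informative as [Hc|Hc].
    + split; [lia|]. split; [intros; lia|intros; exact Hc].
    + destruct (IH (S n)) as [H1 [H2 H3]]. split; [lia|]. split.
      * intros i Hi. destruct (Nat.eq_dec i n) as [->|Hne]; [exact Hc|]. apply H2. lia.
      * intro Hl. apply H3. lia.
Qed.

Lemma aa_spec k j x : aa k j x <= S j /\ (forall i, i < aa k j x -> ~ compat k i (restr x j)) /\
  (aa k j x < S j -> compat k (aa k j x) (restr x j)).
Proof.
  unfold aa. destruct (fc_spec k (restr x j) (S j) 0) as [H1 [H2 H3]].
  split; [lia|]. split; [intros i Hi; apply H2; lia| exact H3].
Qed.

Lemma compat_S k n x j : compat k n (restr x (S j)) -> compat k n (restr x j).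
Proof.
  intros [y [Hy1 Hy2]]. exists y. split; [|exact Hy2]. eapply cyl_pre; [|exact Hy1]. apply restr_pre. lia.
Qed.

Lemma aa_mono k j x : aa k j x <= aa k (S j) x.
Proof.
  destruct (aa_spec k j x) as [A1 [A2 A3]]. destruct (aa_spec k (S j) x) as [B1 [B2 B3]].
  destruct (le_lt_dec (aa k j x) (aa k (S j) x)) as [|Hlt]; [assumption|exfalso].
  apply (A2 _ Hlt). apply compat_S. apply B3. lia.
Qed.

Lemma aa_mono' k x j j' : j <= j' -> aa k j x <= aa k j' x.
Proof. intro H. induction H as [|mm H IH]; [lia|]. pose proof (aa_mono k mm x). lia. Qed.

Lemma aa_bound k n0 x j : F k n0 x -> aa k j x <= n0.
Proof.
  intro Hx. destruct (aa_spec k j x) as [_ [A2 _]].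
  destruct (le_lt_dec (aa k j x) n0) as [|Hlt]; [assumption|exfalso].
  apply (A2 _ Hlt). exists x. split; [apply restr_cyl|exact Hx].
Qed.

Lemma aa_unbounded k x : (forall n, is_closed (F k n)) -> (forall n, ~ F k n x) ->
  forall N, exists J, forall j, J <= j -> N < aa k j x.
Proof.
  intros Hcl Hn N.
  assert (Hall : exists J, forall j, J <= j -> forall n, n <= N -> ~ compat k n (restr x j)).
  { induction N as [|N IH].
    - destruct (Hcl 0 x (Hn 0)) as [m Hm]. exists m. intros j Hj n Hn0 [y [Hy1 Hy2]].
      assert (n = 0) by lia. subst. apply (Hm y); [|exact Hy2].
      apply cyl_restr in Hy1. rewrite length_restr in Hy1. apply restr_agree in Hy1.
      intros i Hi. symmetry. apply Hy1. lia.
    - destruct IH as [J HJ]. destruct (Hcl (S N) x (Hn (S N))) as [m Hm].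
      exists (Nat.max J m). intros j Hj n Hn0 [y [Hy1 Hy2]].
      destruct (Nat.eq_dec n (S N)) as [->|Hne].
      + apply (Hm y); [|exact Hy2].
        apply cyl_restr in Hy1. rewrite length_restr in Hy1. apply restr_agree in Hy1.
        intros i Hi. symmetry. apply Hy1. lia.
      + apply (HJ j ltac:(lia) n ltac:(lia)). exists y. split; assumption. }
  destruct Hall as [J HJ]. exists (Nat.max J N). intros j Hj.
  destruct (aa_spec k j x) as [A1 [_ A3]].
  destruct (le_lt_dec (aa k j x) N) as [Hle|]; [exfalso|assumption].
  apply (HJ j ltac:(lia) (aa k j x) Hle). apply A3. lia.
Qed.

Definition fires k j x := aa k (S j) x <> aa k j x.

Lemma mono_stable (a : nat -> nat) b : (forall j, a j <= a (S j)) -> (forall j, a j <= b) ->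
  exists J, forall j, J <= j -> a (S j) = a j.
Proof.
  intros Hm Hb.
  assert (Hm' : forall j j', j <= j' -> a j <= a j').
  { intros j j' H. induction H as [|mm H IH]; [lia|]. specialize (Hm mm). lia. }
  assert (forall c j0, b - a j0 <= c -> exists J, forall j, J <= j -> a (S j) = a j).
  { induction c as [|c IH]; intros j0 Hc.
    - exists j0. intros j Hj. pose proof (Hm' j0 j Hj). pose proof (Hm' j0 (S j) ltac:(lia)).
      specialize (Hb (S j)). specialize (Hm j). lia.
    - destruct (classic (forall j, j0 <= j -> a (S j) = a j)) as [H|H]; [exists j0; exact H|].
      apply not_all_ex_not in H. destruct H as [j H]. apply imply_to_and in H. destruct H as [H1 H2].
      apply (IH (S j)). specialize (Hm' j0 j H1). specialize (Hm j). lia. }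
  apply (H (b - a 0) 0). lia.
Qed.

Lemma rowfin_iff k x : (forall n, is_closed (F k n)) ->
  ((exists n, F k n x) <-> exists J, forall j, J <= j -> ~ fires k j x).
Proof.
  intro Hcl. split.
  - intros [n0 Hn0]. destruct (mono_stable (fun j => aa k j x) n0) as [J HJ].
    + intro. apply aa_mono.
    + intro. apply aa_bound, Hn0.
    + exists J. intros j Hj Hf. apply Hf, HJ, Hj.
  - intros [J HJ]. apply NNPP. intro Hno.
    assert (Hn : forall n, ~ F k n x) by (intros n Hn; apply Hno; exists n; exact Hn).
    destruct (aa_unbounded k x Hcl Hn (aa k J x)) as [J' HJ'].
    assert (Hc : forall j, J <= j -> aa k j x = aa k J x).
    { intros j Hj. induction Hj as [|mm Hj IHHj]; [reflexivity|]. rewrite <- IHHj.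
      destruct (Nat.eq_dec (aa k (S mm) x) (aa k mm x)); [assumption|]. exfalso. apply (HJ mm); [lia|exact n]. }
    specialize (HJ' (Nat.max J J') ltac:(lia)). rewrite (Hc (Nat.max J J') ltac:(lia)) in HJ'. lia.
Qed.

Definition firesb k j x : bool := if excluded_middle_informative (fires k j x) then true else false.
Fixpoint mf j x k fuel : option nat :=
  match fuel with O => None | S f => if firesb k j x then Some k else mf j x (S k) f end.
Definition minfire j x := mf j x 0 (S j).

Lemma mf_spec j x fuel : forall k0, match mf j x k0 fuel with
  | Some k => k0 <= k < k0 + fuel /\ fires k j x /\ (forall i, k0 <= i < k -> ~ fires i j x)
  | None => forall i, k0 <= i < k0 + fuel -> ~ fires i j x end.
Proof.
  induction fuel as [|f IH]; intro k0; simpl.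
  - intros; lia.
  - unfold firesb. destruct excluded_middle_informative as [Hf|Hf].
    + split; [lia|]. split; [exact Hf| intros; lia].
    + specialize (IH (S k0)). destruct (mf j x (S k0) f) as [k|].
      * destruct IH as [H1 [H2 H3]]. split; [lia|]. split; [exact H2|].
        intros i Hi. destruct (Nat.eq_dec i k0) as [->|]; [exact Hf|]. apply H3. lia.
      * intros i Hi. destruct (Nat.eq_dec i k0) as [->|]; [exact Hf|]. apply IH. lia.
Qed.

Lemma minfire_some j x k : minfire j x = Some k ->
  k <= j /\ fires k j x /\ forall i, i < k -> ~ fires i j x.
Proof.
  intro H. pose proof (mf_spec j x (S j) 0) as Hs. unfold minfire in H. rewrite H in Hs.
  destruct Hs as [H1 [H2 H3]]. split; [lia|]. split; [exact H2|]. intros i Hi. apply H3. lia.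
Qed.

Lemma minfire_none j x : minfire j x = None -> forall i, i <= j -> ~ fires i j x.
Proof.
  intro H. pose proof (mf_spec j x (S j) 0) as Hs. unfold minfire in H. rewrite H in Hs.
  intros i Hi. apply Hs. lia.
Qed.

Lemma aa_dep k j x y : agree j x y -> aa k j x = aa k j y.
Proof. intro H. unfold aa. rewrite (agree_restr j x y H). reflexivity. Qed.

Lemma minfire_dep j x y : agree (S j) x y -> minfire j x = minfire j y.
Proof.
  intro H. assert (Hf : forall k, firesb k j x = firesb k j y).
  { intro k. unfold firesb, fires. rewrite (aa_dep k (S j) x y H), (aa_dep k j x y (agree_le (S j) j x y ltac:(lia) H)).
    reflexivity. }
  assert (forall f k, mf j x k f = mf j y k f).
  { intro f. induction f as [|f IH]; intro k; simpl; [reflexivity|].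
    rewrite Hf. destruct (firesb k j y); [reflexivity| apply IH]. }
  apply H0.
Qed.

End Sig.

Open Scope R_scope.

Definition eta (k : nat) : R := / (16 * (INR k + 1)).
Definition epsn (j : nat) : R := eta j / 2.

Lemma eta_pos k : 0 < eta k.
Proof. unfold eta. apply Rinv_0_lt_compat. pose proof (pos_INR k). lra. Qed.
Lemma eta_le k : eta k <= 1/16.
Proof. unfold eta. pose proof (pos_INR k). unfold Rdiv. rewrite Rmult_1_l.
  apply Rinv_le_contravar; lra. Qed.
Lemma eta_anti k k' : (k <= k')%nat -> eta k' <= eta k.
Proof. intro H. unfold eta. apply le_INR in H. pose proof (pos_INR k).
  apply Rinv_le_contravar; lra. Qed.
Lemma epsn_pos j : 0 < epsn j.
Proof. unfold epsn. pose proof (eta_pos j). lra. Qed.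

Section Constr.
Variable A : CSet.
Variable F : nat -> nat -> CSet.
Variable t0 : list bool.

Definition dipR (e : R) (t : list bool) : list bool :=
  match excluded_middle_informative (exists r, Seg A t r (2 * e) /\ e <= 1 - DD A (t ++ r)) with
  | left H => proj1_sig (constructive_indefinite_description _ H)
  | right _ => [] end.

Lemma dipR_spec e t : (exists r, Seg A t r (2 * e) /\ e <= 1 - DD A (t ++ r)) ->
  Seg A t (dipR e t) (2 * e) /\ e <= 1 - DD A (t ++ dipR e t).
Proof.
  intro H. unfold dipR. destruct excluded_middle_informative as [H'|H']; [|contradiction].
  destruct (constructive_indefinite_description _ H'). simpl. exact a.
Qed.

Definition climbR (e e' : R) (u : list bool) : list bool :=
  match excluded_middle_informative (exists r, r <> [] /\ Seg A u r (4 * e) /\ 1 - DD A (u ++ r) < e') with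
  | left H => proj1_sig (constructive_indefinite_description _ H)
  | right _ => [false] end.

Lemma climbR_spec e e' u : (exists r, r <> [] /\ Seg A u r (4 * e) /\ 1 - DD A (u ++ r) < e') ->
  Seg A u (climbR e e' u) (4 * e) /\ 1 - DD A (u ++ climbR e e' u) < e'.
Proof.
  intro H. unfold climbR. destruct excluded_middle_informative as [H'|H']; [|contradiction].
  destruct (constructive_indefinite_description _ H'). simpl. tauto.
Qed.

Lemma climbR_ne e e' u : climbR e e' u <> [].
Proof.
  unfold climbR. destruct excluded_middle_informative as [H'|H']; [|discriminate].
  destruct (constructive_indefinite_description _ H'). simpl. tauto.
Qed.

Definition step (j : nat) (o : option nat) (t : list bool) : list bool :=
  match o with
  | None => t ++ climbR (epsn j) (epsn (S j)) t
  | Some k => (t ++ dipR (eta k) t) ++ climbR (eta k) (epsn (S j)) (t ++ dipR (eta k) t)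
  end.

Definition th (j : nat) (o : option nat) : R :=
  match o with None => 4 * epsn j | Some k => 4 * eta k end.

Lemma step_ext j o t : exists r, step j o t = t ++ r /\ r <> [].
Proof.
  destruct o as [k|]; simpl.
  - eexists. split; [rewrite <- app_assoc; reflexivity|]. intro H. apply app_eq_nil in H.
    destruct H as [_ H]. apply (climbR_ne _ _ _ H).
  - eexists. split; [reflexivity| apply climbR_ne].
Qed.

Lemma step_ok j o t : measurable A -> empty_interior (Phi A) -> 1 - DD A t < epsn j ->
  (forall k, o = Some k -> (k <= j)%nat) ->
  1 - DD A (step j o t) < epsn (S j) /\ (exists r, step j o t = t ++ r /\ Seg A t r (th j o)) /\
  (forall k, o = Some k -> exists u, pfx t u /\ pfx u (step j o t) /\ eta k <= 1 - DD A u).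
Proof.
  intros HA HE Ht Ho. destruct o as [k|].
  - specialize (Ho k eq_refl).
    pose proof (eta_pos k). pose proof (eta_le k). pose proof (eta_anti k j Ho).
    assert (Hd : exists r, Seg A t r (2 * eta k) /\ eta k <= 1 - DD A (t ++ r)).
    { apply dip; try assumption; [lra|]. unfold epsn in Ht. pose proof (eta_pos j). lra. }
    destruct (dipR_spec _ _ Hd) as [Hd1 Hd2].
    set (r1 := dipR (eta k) t) in *.
    assert (Hc : exists r, r <> [] /\ Seg A (t ++ r1) r (4 * eta k) /\ 1 - DD A ((t ++ r1) ++ r) < epsn (S j)).
    { apply climb; try lra; [apply epsn_pos|]. apply seg_end in Hd1. exact Hd1. }
    destruct (climbR_spec _ _ _ Hc) as [Hc1 Hc2].
    simpl. fold r1. set (r2 := climbR (eta k) (epsn (S j)) (t ++ r1)) in *.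
    split; [exact Hc2|]. split.
    + exists (r1 ++ r2). split; [rewrite app_assoc; reflexivity|]. apply seg_comp; [|exact Hc1].
      apply (seg_mono _ _ _ (2 * eta k)); [lra|exact Hd1].
    + intros k' Hk'. inversion Hk'; subst. exists (t ++ r1). split; [apply pre_app|]. split; [apply pre_app|exact Hd2].
  - assert (Hc : exists r, r <> [] /\ Seg A t r (4 * epsn j) /\ 1 - DD A (t ++ r) < epsn (S j)).
    { pose proof (eta_le j). apply climb; [apply epsn_pos| unfold epsn; lra| apply epsn_pos|].
      pose proof (epsn_pos j). lra. }
    destruct (climbR_spec _ _ _ Hc) as [Hc1 Hc2].
    simpl. split; [exact Hc2|]. split.
    + eexists. split; [reflexivity|exact Hc1].
    + intros k Hk. discriminate.
Qed.

Fixpoint tt (x : Cantor) (j : nat) : list bool :=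
  match j with O => t0 | S j' => step j' (minfire F j' x) (tt x j') end.

Definition fmap (x : Cantor) : Cantor := slim (tt x).

Lemma tt_pfx x j : pfx (tt x j) (tt x (S j)).
Proof. simpl. destruct (step_ext j (minfire F j x) (tt x j)) as [r [-> _]]. apply pre_app. Qed.

Lemma tt_len x j : (length (tt x j) + 1 <= length (tt x (S j)))%nat.
Proof.
  simpl. destruct (step_ext j (minfire F j x) (tt x j)) as [r [-> Hr]]. rewrite length_app.
  destruct r; [contradiction|simpl; lia].
Qed.

Lemma tt_len_ge x j : (j <= length (tt x j))%nat.
Proof. induction j; [lia|]. pose proof (tt_len x j). lia. Qed.

Lemma tt_len_mono x j j' : (j <= j')%nat -> (length (tt x j) <= length (tt x j'))%nat.
Proof. intro H. induction H as [|mm H IH]; [lia|]. pose proof (tt_len x mm). lia. Qed.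

Lemma fmap_cyl x j : cyl (tt x j) (fmap x).
Proof. apply slim_cyl; [apply tt_pfx| apply tt_len_ge]. Qed.

Lemma tt_dep x y j : agree j x y -> tt x j = tt y j.
Proof.
  induction j; intro H; [reflexivity|]. simpl.
  rewrite (IHj (agree_le (S j) j x y ltac:(lia) H)), (minfire_dep F j x y H). reflexivity.
Qed.

Lemma fmap_cont : continuous fmap.
Proof.
  intros x n. exists n. intros y Hy i Hi. unfold fmap, slim.
  rewrite (tt_dep x y (S i)); [reflexivity|]. apply (agree_le n); [lia|exact Hy].
Qed.

Lemma find_stage x J n : (length (tt x J) <= n)%nat ->
  exists j, (J <= j)%nat /\ (length (tt x j) <= n)%nat /\ (n < length (tt x (S j)))%nat.
Proof.
  intro H. destruct (least_nat (fun j => (n < length (tt x j))%nat)) as [j1 [Hj1 Hj2]].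
  { exists (S n). pose proof (tt_len_ge x (S n)). lia. }
  destruct j1 as [|j].
  - exfalso. pose proof (tt_len_mono x 0 J ltac:(lia)). lia.
  - exists j. assert (Hn : ~ (n < length (tt x j))%nat) by (apply Hj2; lia).
    split; [|split; [lia|exact Hj1]].
    destruct (le_lt_dec J j) as [|Hlt]; [assumption|]. exfalso.
    pose proof (tt_len_mono x (S j) J ltac:(lia)). lia.
Qed.

Section Hyp.
Hypothesis HA : measurable A.
Hypothesis HE : empty_interior (Phi A).
Hypothesis Ht0 : 1 - DD A t0 < epsn 0.

Lemma tt_inv x j : 1 - DD A (tt x j) < epsn j.
Proof.
  induction j; [exact Ht0|]. simpl. apply step_ok; try assumption.
  intros k Hk. apply (minfire_some F j x k Hk).
Qed.

Lemma tt_step x j : (exists r, tt x (S j) = tt x j ++ r /\ Seg A (tt x j) r (th j (minfire F j x))) /\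
  (forall k, minfire F j x = Some k -> exists u, pfx (tt x j) u /\ pfx u (tt x (S j)) /\ eta k <= 1 - DD A u).
Proof.
  pose proof (step_ok j (minfire F j x) (tt x j) HA HE (tt_inv x j)) as H.
  destruct H as [_ [H1 H2]]; [intros k Hk; apply (minfire_some F j x k Hk)|]. split; assumption.
Qed.

Lemma deficit_between x j n : (length (tt x j) <= n <= length (tt x (S j)))%nat ->
  1 - DD A (restr (fmap x) n) <= th j (minfire F j x).
Proof.
  intro Hn. destruct (tt_step x j) as [[r [Hr Hseg]] _].
  pose proof (fmap_cyl x (S j)) as Hc. rewrite Hr in Hc.
  rewrite Hr, length_app in Hn.
  pose proof (restr_seg (fmap x) (tt x j) r (n - length (tt x j)) Hc ltac:(lia)) as E.
  replace (length (tt x j) + (n - length (tt x j)))%nat with n in E by lia.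
  rewrite E. apply Hseg. lia.
Qed.

Lemma fmap_correct x : (forall k n, is_closed (F k n)) ->
  ((forall k, exists n, F k n x) <-> Phi A (fmap x)).
Proof.
  intro Hcl. split.
  - intro Hall. apply Phi_char. intros eps Heps.
    destruct (inv_small (eps / 4)) as [K HK]; [lra|].
    assert (H4 : 4 * eta K < eps).
    { unfold eta. rewrite Rinv_mult. pose proof (pos_INR K).
      assert (0 < / (INR K + 1)) by (apply Rinv_0_lt_compat; lra). lra. }
    assert (HJ0 : exists J0, forall j, (J0 <= j)%nat -> forall k, (k <= K)%nat -> ~ fires F k j x).
    { clear H4 HK. induction K as [|K IH].
      - destruct (proj1 (rowfin_iff F 0 x (Hcl 0%nat)) (Hall 0%nat)) as [J HJ].
        exists J. intros j Hj k Hk. assert (k = 0%nat) by lia. subst. apply HJ, Hj.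
      - destruct IH as [J1 HJ1]. destruct (proj1 (rowfin_iff F (S K) x (Hcl (S K))) (Hall (S K))) as [J2 HJ2].
        exists (Nat.max J1 J2). intros j Hj k Hk. destruct (Nat.eq_dec k (S K)) as [->|].
        + apply HJ2. lia.
        + apply HJ1; lia. }
    destruct HJ0 as [J0 HJ0].
    exists (length (tt x (Nat.max J0 K))). intros n Hn.
    destruct (find_stage x (Nat.max J0 K) n Hn) as [j [Hj1 [Hj2 Hj3]]].
    pose proof (deficit_between x j n ltac:(lia)) as Hd.
    assert (Hth : th j (minfire F j x) <= 4 * eta K).
    { destruct (minfire F j x) as [k'|] eqn:Hm; simpl.
      - destruct (minfire_some F j x k' Hm) as [_ [Hf _]].
        assert (K <= k')%nat.
        { destruct (le_lt_dec K k') as [|Hlt]; [lia|]. exfalso. exact (HJ0 j ltac:(lia) k' ltac:(lia) Hf). }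
        pose proof (eta_anti K k' H). lra.
      - unfold epsn. pose proof (eta_anti K j ltac:(lia)). pose proof (eta_pos j). lra. }
    unfold R_dist. pose proof (DD_le1 A (restr (fmap x) n)).
    rewrite Rabs_minus_sym, Rabs_right by lra. lra.
  - intros HP k. apply (rowfin_iff F k x (Hcl k)). apply NNPP. intro Hno.
    apply Phi_char in HP. destruct (HP (eta k) (eta_pos k)) as [N HN].
    assert (Hinf : forall J, exists j, (J <= j)%nat /\ fires F k j x).
    { intro J. apply NNPP. intro Hn. apply Hno. exists J. intros j Hj Hf. apply Hn. exists j. split; assumption. }
    destruct (Hinf (Nat.max N k)) as [j [Hj Hf]].
    destruct (minfire F j x) as [k'|] eqn:Hm.
    + destruct (minfire_some F j x k' Hm) as [_ [_ Hmin]].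
      assert (Hk' : (k' <= k)%nat).
      { destruct (le_lt_dec k' k) as [|Hlt]; [assumption|]. exfalso. apply (Hmin k Hlt Hf). }
      destruct (proj2 (tt_step x j) k' Hm) as [u [Hu1 [Hu2 Hu3]]].
      assert (Hcu : cyl u (fmap x)) by (eapply cyl_pre; [exact Hu2| apply fmap_cyl]).
      apply cyl_restr in Hcu.
      assert (Hlu : (N <= length u)%nat).
      { pose proof (pre_length _ _ Hu1). pose proof (tt_len_ge x j). lia. }
      specialize (HN (length u) Hlu). rewrite Hcu in HN. unfold R_dist in HN.
      pose proof (DD_le1 A u). rewrite Rabs_minus_sym, Rabs_right in HN by lra.
      pose proof (eta_anti k' k Hk'). lra.
    + apply (minfire_none F j x Hm k); [lia|exact Hf].
Qed.

End Hyp.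
End Constr.

Theorem theorem1p3 (A : CSet) :
  measurable A ->
  (exists x, Phi A x) ->
  empty_interior (Phi A) ->
  complete_Pi03 (Phi A).
Proof.
  intros HA [x0 Hx0] HE. split; [apply Phi_Pi03|].
  intros Y [G [HG HY]].
  set (FF := fun k => proj1_sig (constructive_indefinite_description _ (HG k))).
  assert (HFF : forall k, (forall n, is_closed (FF k n)) /\ forall x, G k x <-> exists n, FF k n x).
  { intro k. unfold FF. destruct (constructive_indefinite_description _ _). simpl. exact a. }
  apply Phi_char in Hx0. destruct (Hx0 (epsn 0) (epsn_pos 0)) as [N HN].
  specialize (HN N (le_n N)). unfold R_dist in HN.
  assert (Ht0 : 1 - DD A (restr x0 N) < epsn 0).
  { pose proof (DD_le1 A (restr x0 N)). rewrite Rabs_minus_sym, Rabs_right in HN by lra. exact HN. }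
  exists (fmap A FF (restr x0 N)). split; [apply fmap_cont|].
  intro x. rewrite HY. rewrite <- (fmap_correct A FF (restr x0 N) HA HE Ht0 x).
  - split; intros H k; [apply (proj2 (HFF k)), H| apply (proj2 (HFF k)), H].
  - intro k. apply (proj1 (HFF k)).
Qed.
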